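(* Let $\mathcal{A}$ be a commutative $\sigma$-finite W*-algebra or a commutative AW*-algebra, and let $\mathcal{E}$ be a Hilbert C*-module over $\mathcal{A}$ of rank $d$. Let $n\geq d$ and let $\{\tau_j\}_{j=1}^n$ be a collection of vectors in $\mathcal{E}$ with $\langle \tau_j,\tau_j\rangle=1$ for all $1\leq j\leq n$. Then, for every $m\in\mathbb{N}$, \[ \sum_{j=1}^n\sum_{k=1}^n\|\langle \tau_j, \tau_k\rangle \|^{2m}\geq \sum_{j=1}^n\sum_{k=1}^n\langle \tau_j, \tau_k\rangle ^{m}\langle \tau_k, \tau_j\rangle ^{m}\geq \frac{n^2}{{d+m-1\choose m}}, \] in particular \[ \sum_{j=1}^n\sum_{k=1}^n\|\langle \tau_j, \tau_k\rangle \|^{2} \geq \sum_{j=1}^n\sum_{k=1}^n\langle \tau_j, \tau_k\rangle \langle \tau_k, \tau_j\rangle \geq \frac{n^2}{d}. \] Further (for $n\geq 2$), for every $m\in\mathbb{N}$, \[ \max _{1\leq j,k \leq n,\, j\neq k}\|\langle \tau_j, \tau_k\rangle \|^{2m}\geq \frac{1}{n-1}\left[\frac{n}{{d+m-1\choose m}}-1\right], \] and in particular \[ \max _{1\leq j,k \leq n,\, j\neq k}\|\langle \tau_j, \tau_k\rangle \|^{2}\geq\frac{n-d}{d(n-1)}. \]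
   Context: A W*-algebra is $\sigma$-finite if it contains at most countably many mutually orthogonal (nonzero) projections. A C*-algebra is an AW*-algebra if every set of orthogonal projections has a supremum and every maximal commutative self-adjoint subalgebra is generated by its projections. Such algebras are unital, with identity $1$. The $\mathcal{A}$-valued inner product on $\mathcal{E}$ is linear in the first variable and conjugate-linear in the second; $\mathcal{A}$ acts from the left. $\mathcal{E}$ has rank $d$ if it has an orthonormal basis $\{\omega_j\}_{j=1}^d$, i.e. $\langle\omega_j,\omega_k\rangle=\delta_{jk}1$ and $x=\sum_{j=1}^d\langle x,\omega_j\rangle\omega_j$ for all $x\in\mathcal{E}$. Inequalities between elements of $\mathcal{A}$ refer to the order on self-adjoint elements, a real number $c$ being identified with $c\cdot1$; $\|\cdot\|$ is the C*-norm of $\mathcal{A}$. *)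

(* Defs.v *)
From mathcomp Require Import all_boot all_order all_algebra.
From mathcomp Require Import reals complex.
Import Order.TTheory GRing.Theory Num.Theory.
Set Implicit Arguments. Unset Strict Implicit. Unset Printing Implicit Defensive.
Local Open Scope ring_scope.

Definition cnorm {R : realType} (l : R[i]) : R := ComplexField.Normc.normc l.

Section CStar.
Variable R : realType.
Variable A : comAlgType R[i].
Variables (nrm : A -> R) (st : A -> A).

Definition nconv (u : nat -> A) (a : A) : Prop :=
  forall eps : R, 0 < eps -> exists N : nat, forall k, (N <= k)%N -> nrm (u k - a) < eps.
Definition ncauchy (u : nat -> A) : Prop :=
  forall eps : R, 0 < eps -> exists N : nat,
    forall k l, (N <= k)%N -> (N <= l)%N -> nrm (u k - u l) < eps.

Definition is_Cstar_algebra : Prop :=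
  [/\ [/\ (forall a, 0 <= nrm a), (forall a, nrm a = 0 -> a = 0) &
      (forall a b, nrm (a + b) <= nrm a + nrm b)],
      (forall (l : R[i]) a, nrm (l *: a) = cnorm l * nrm a),
      ((forall a b, nrm (a * b) <= nrm a * nrm b) /\
       (forall u, ncauchy u -> exists a, nconv u a)),
      [/\ (forall a, st (st a) = a),
          (forall a b, st (a + b) = st a + st b),
          (forall (l : R[i]) a, st (l *: a) = conjc l *: st a) &
          (forall a b, st (a * b) = st b * st a)] &
      (forall a, nrm (st a * a) = nrm a ^+ 2)].

Definition positive (a : A) : Prop := exists b, a = st b * b.
Definition ge_sa (a b : A) : Prop := st a = a /\ st b = b /\ positive (a - b).

Definition projection (p : A) : Prop := p * p = p /\ st p = p.
Definition proj_le (p q : A) : Prop := p * q = p.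
Definition orthogonal_family (S : A -> Prop) : Prop :=
  (forall p, S p -> projection p) /\
  (forall p q, S p -> S q -> p <> q -> p * q = 0).
Definition is_proj_sup (S : A -> Prop) (q : A) : Prop :=
  projection q /\ (forall p, S p -> proj_le p q) /\
  (forall r, projection r -> (forall p, S p -> proj_le p r) -> proj_le q r).

Definition commutative_sa_subalgebra (B : A -> Prop) : Prop :=
  [/\ [/\ B 0, B 1, (forall a b, B a -> B b -> B (a + b)) &
      (forall (l : R[i]) a, B a -> B (l *: a))],
      (forall a b, B a -> B b -> B (a * b)),
      (forall a, B a -> B (st a)) &
      (forall a b, B a -> B b -> a * b = b * a)].
Definition maximal_commutative_sa_subalgebra (B : A -> Prop) : Prop :=
  commutative_sa_subalgebra B /\
  (forall B' : A -> Prop, commutative_sa_subalgebra B' ->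
     (forall a, B a -> B' a) -> forall a, B' a -> B a).
Definition closed_star_subalgebra (B : A -> Prop) : Prop :=
  [/\ [/\ B 0, B 1, (forall a b, B a -> B b -> B (a + b)) &
      (forall (l : R[i]) a, B a -> B (l *: a))],
      (forall a b, B a -> B b -> B (a * b)),
      (forall a, B a -> B (st a)) &
      (forall u a, (forall k, B (u k)) -> nconv u a -> B a)].
Definition generated_by_projections (B : A -> Prop) : Prop :=
  forall D : A -> Prop, closed_star_subalgebra D ->
    (forall p, B p -> projection p -> D p) -> forall a, B a -> D a.

Definition is_AWstar_algebra : Prop :=
  is_Cstar_algebra /\
  (forall S, orthogonal_family S -> exists q, is_proj_sup S q) /\
  (forall B, maximal_commutative_sa_subalgebra B -> generated_by_projections B).

End CStar.

Section HilbertModule.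
Variable R : realType.
Variable A : comAlgType R[i].
Variables (nrm : A -> R) (st : A -> A).
Variable E : lmodType A.
Variable ip : E -> E -> A.

Definition is_Hilbert_module : Prop :=
  [/\ ((forall x y z, ip (x + y) z = ip x z + ip y z) /\
      (forall (a : A) x y, ip (a *: x) y = a * ip x y)),
      (forall x y, st (ip x y) = ip y x),
      (forall x, positive st (ip x x)),
      (forall x, ip x x = 0 -> x = 0) &
      (forall u : nat -> E,
         (forall eps : R, 0 < eps -> exists N : nat, forall k l,
            (N <= k)%N -> (N <= l)%N -> Num.sqrt (nrm (ip (u k - u l) (u k - u l))) < eps) ->
         exists x, forall eps : R, 0 < eps -> exists N : nat, forall k,
            (N <= k)%N -> Num.sqrt (nrm (ip (u k - x) (u k - x))) < eps)].

Definition has_rank (d : nat) : Prop :=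
  exists w : 'I_d -> E,
    (forall j k, ip (w j) (w k) = (j == k)%:R) /\
    (forall x, x = \sum_(j < d) ip x (w j) *: w j).

End HilbertModule.

Definition rone {R : realType} {A : comAlgType R[i]} (r : R) : A :=
  (real_complex R r) *: (1 : A).

(* Main.v *)
Require Import Defs.
From mathcomp Require Import all_boot all_order all_algebra.
From mathcomp Require Import reals complex.
From mathcomp Require Import ring lra zify.
Import Order.TTheory GRing.Theory Num.Theory.
Set Implicit Arguments. Unset Strict Implicit. Unset Printing Implicit Defensive.
Local Open Scope ring_scope.
Section CS.
Variables (R : realType) (A : comAlgType R[i]) (nrm : A -> R) (st : A -> A).
Hypothesis HC : is_Cstar_algebra nrm st.

Lemma nrm_ge0 a : 0 <= nrm a. Proof. by have [[h _ _] _ _ _ _] := HC. Qed.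
Lemma nrm_eq0 a : nrm a = 0 -> a = 0. Proof. by have [[_ h _] _ _ _ _] := HC; apply: h. Qed.
Lemma nrmD a b : nrm (a + b) <= nrm a + nrm b. Proof. by have [[_ _ h] _ _ _ _] := HC. Qed.
Lemma nrmZ l a : nrm (l *: a) = cnorm l * nrm a. Proof. by have [_ h _ _ _] := HC. Qed.
Lemma nrmM a b : nrm (a * b) <= nrm a * nrm b. Proof. by have [_ _ [h _] _ _] := HC. Qed.
Lemma complete u : ncauchy nrm u -> exists a, nconv nrm u a.
Proof. by have [_ _ [_ h] _ _] := HC; apply: h. Qed.
Lemma stK a : st (st a) = a. Proof. by have [_ _ _ [h _ _ _] _] := HC. Qed.
Lemma stD a b : st (a + b) = st a + st b. Proof. by have [_ _ _ [_ h _ _] _] := HC. Qed.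
Lemma stZ l a : st (l *: a) = conjc l *: st a. Proof. by have [_ _ _ [_ _ h _] _] := HC. Qed.
Lemma stM a b : st (a * b) = st b * st a. Proof. by have [_ _ _ [_ _ _ h] _] := HC. Qed.
Lemma nrm_cs a : nrm (st a * a) = nrm a ^+ 2. Proof. by have [_ _ _ _ h] := HC. Qed.

Lemma cnormE (a b : R) : cnorm (Complex a b) = Num.sqrt (a ^+ 2 + b ^+ 2).
Proof. by []. Qed.
Lemma cnormR (r : R) : cnorm (real_complex R r) = `|r|.
Proof. by rewrite /cnorm /= expr0n /= addr0 sqrtr_sqr. Qed.
Lemma conjcR (r : R) : conjc (real_complex R r) = real_complex R r.
Proof. by rewrite /conjc /= oppr0. Qed.

Lemma nrm0 : nrm 0 = 0.
Proof. by rewrite -{1}(scale0r (0:A)) nrmZ -[0 : R[i]]/(real_complex R 0) cnormR normr0 mul0r. Qed.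
Lemma st0 : st 0 = 0.
Proof. rewrite -{1}(scale0r (0:A)) stZ; have -> : conjc (0:R[i]) = 0 by rewrite /conjc /= oppr0. by rewrite scale0r. Qed.
Lemma stN a : st (- a) = - st a.
Proof. by apply/eqP; rewrite -subr_eq0 opprK -stD addNr st0. Qed.
Lemma stB a b : st (a - b) = st a - st b.
Proof. by rewrite stD stN. Qed.
Lemma stC a b : st (a * b) = st a * st b.
Proof. by rewrite stM mulrC. Qed.
Lemma st1 : st 1 = 1.
Proof. by rewrite -[RHS]stK -[st 1]mulr1 stM stK mulr1. Qed.
Lemma nrmN a : nrm (- a) = nrm a.
Proof.
rewrite -scaleN1r nrmZ.
have -> : (-1 : R[i]) = real_complex R (-1) by rewrite rmorphN1.
by rewrite cnormR normrN1 mul1r.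
Qed.
Lemma nrm_st a : nrm (st a) = nrm a.
Proof.
have H x : nrm x <= nrm (st x).
  have [->|xp] := eqVneq (nrm x) 0; first exact: nrm_ge0.
  have xg : 0 < nrm x by rewrite lt_def xp nrm_ge0.
  have := nrmM (st x) x; rewrite nrm_cs expr2 => h.
  by rewrite -(ler_pM2r xg).
by apply/eqP; rewrite eq_le H -{2}(stK a) H.
Qed.
Lemma nrm1 : nrm 1 = 1.
Proof.
have := nrm_cs 1; rewrite st1 mulr1 expr2 => h.
have n0 : nrm 1 != 0 by apply/eqP => /nrm_eq0/eqP; rewrite oner_eq0.
by apply: (mulfI n0); rewrite -h mulr1.
Qed.
Lemma nrmB a b : nrm (a - b) <= nrm a + nrm b.
Proof. by rewrite -(nrmN b) nrmD. Qed.

Definition ro (r : R) : A := rone r.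
Lemma roE r : ro r = (in_alg A \o real_complex R) r. Proof. by []. Qed.
Lemma roD r s : ro (r + s) = ro r + ro s. Proof. by rewrite !roE rmorphD. Qed.
Lemma roB r s : ro (r - s) = ro r - ro s. Proof. by rewrite !roE rmorphB. Qed.
Lemma roN r : ro (- r) = - ro r. Proof. by rewrite !roE rmorphN. Qed.
Lemma roM r s : ro (r * s) = ro r * ro s. Proof. by rewrite !roE rmorphM. Qed.
Lemma ro1 : ro 1 = 1. Proof. by rewrite !roE rmorph1. Qed.
Lemma ro0 : ro 0 = 0. Proof. by rewrite !roE rmorph0. Qed.
Lemma ron k : ro k%:R = k%:R. Proof. by rewrite !roE rmorph_nat. Qed.
Lemma roX r k : ro (r ^+ k) = ro r ^+ k. Proof. by rewrite !roE rmorphXn. Qed.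
Lemma ro_sum I (s : seq I) (P : pred I) (F : I -> R) :
  ro (\sum_(i <- s | P i) F i) = \sum_(i <- s | P i) ro (F i).
Proof. by rewrite !roE rmorph_sum. Qed.
Lemma ro_mulE r a : ro r * a = real_complex R r *: a. Proof. by rewrite /ro /rone mulr_algl. Qed.
Lemma nrm_roM r a : nrm (ro r * a) = `|r| * nrm a.
Proof. by rewrite ro_mulE nrmZ cnormR. Qed.
Lemma nrm_ro r : nrm (ro r) = `|r|.
Proof. by rewrite -[ro r]mulr1 nrm_roM nrm1 mulr1. Qed.
Lemma st_roM r a : st (ro r * a) = ro r * st a.
Proof. by rewrite !ro_mulE stZ conjcR. Qed.
Lemma st_ro r : st (ro r) = ro r.
Proof. by rewrite -[ro r]mulr1 st_roM st1. Qed.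
Lemma roV r : r != 0 -> ro r * ro r^-1 = 1.
Proof. by move=> r0; rewrite -roM divff // ro1. Qed.


Lemma nrm_sym a b : nrm (a - b) = nrm (b - a).
Proof. by rewrite -nrmN opprB. Qed.

Lemma zero_lem x (c : R) : 0 <= c -> (forall eps, 0 < eps -> nrm x <= eps * c) -> x = 0.
Proof.
move=> c0 H; apply: nrm_eq0; apply/eqP; rewrite eq_le nrm_ge0 andbT.
rewrite leNgt; apply/negP => xp.
have e0 : 0 < nrm x / (2 * (c + 1)) by rewrite divr_gt0 // mulr_gt0 // ltr_wpDl.
have h := H _ e0.
have c1 : 0 < c + 1 by rewrite ltr_wpDl.
set q := nrm x / (2 * (c + 1)) in e0 h.
have hq : q * (2 * (c + 1)) = nrm x by rewrite /q mulfVK // mulf_neq0 // gt_eqF.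
nra.
Qed.

Fixpoint rs (y : A) k : A := if k is k'.+1 then ro (2^-1) * (y + rs y k' ^+ 2) else 0.
Fixpoint rh k : R := if k is k'.+1 then 2^-1 * (1 + rh k' ^+ 2) else 0.

Lemma rhS k : rh k.+1 = 2^-1 * (1 + rh k ^+ 2). Proof. by []. Qed.
Lemma rh0 : rh 0 = 0. Proof. by []. Qed.
Lemma rsS y k : rs y k.+1 = ro (2^-1) * (y + rs y k ^+ 2). Proof. by []. Qed.
Lemma rs0 y : rs y 0 = 0. Proof. by []. Qed.

Lemma rh_bounds k : (0 <= rh k <= 1) /\ (1 - rh k) * (k%:R + 2) <= 2.
Proof.
elim: k => [|k [/andP[h0 h1] h2]].
  rewrite rh0; split; [apply/andP; split|]; rewrite ?mul1r ?subr0 ?add0r //.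
  lra.
rewrite rhS -natr1.
have t0 : 0 <= (k%:R : R) by [].
have hx : rh k ^+ 2 <= 1 by rewrite expr2; nra.
have hx0 : 0 <= rh k ^+ 2 by rewrite expr2; nra.
have E2 : (1 + 1 : R) = 2 by []. rewrite ?E2. split; first (apply/andP; split; lra).
have hp : 0 <= (2 - (1 - rh k) * (k%:R + 2)) * (1 + rh k).
  by apply: mulr_ge0; lra.
have he : 0 <= (1 - rh k) ^+ 2 by rewrite expr2; nra.
nra.
Qed.

Lemma rh_mono k : rh k <= rh k.+1.
Proof. rewrite rhS; have := rh_bounds k => -[/andP[h0 h1] _]; nra. Qed.

Section Sq.
Variable y : A.
Hypothesis sy : st y = y.
Hypothesis ny : nrm y <= 1.

Lemma rs_st k : st (rs y k) = rs y k.
Proof.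
elim: k => [|k IH] /=; first exact: st0.
by rewrite st_roM stD expr2 stC IH sy.
Qed.

Lemma half_ge0 : 0 <= (2^-1 : R). Proof. by rewrite invr_ge0 ler0n. Qed.
Lemma half_gt0 : 0 < (2^-1 : R). Proof. by rewrite invr_gt0 ltr0n. Qed.

Lemma rs_nrm k : nrm (rs y k) <= rh k.
Proof.
elim: k => [|k IH] /=; first by rewrite nrm0.
have [/andP[h0 h1] _] := rh_bounds k.
rewrite nrm_roM ger0_norm ?half_ge0 // ler_pM2l ?half_gt0 //.
apply: (le_trans (nrmD _ _)).
apply: lerD => //; apply: (le_trans (nrmM _ _)); rewrite expr2.
by apply: ler_pM => //; exact: nrm_ge0.
Qed.

Lemma rs_diff k : nrm (rs y k.+1 - rs y k) <= rh k.+1 - rh k.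
Proof.
elim: k => [|k IH].
  rewrite rsS rs0 rhS rh0 subr0 expr0n /= addr0 subr0 nrm_roM ger0_norm ?half_ge0 //.
  by rewrite expr2 mulr0 addr0 ler_pM2l ?half_gt0.
set r1 := rs y k.+1; set r0 := rs y k.
have -> : rs y k.+2 - r1 = ro (2^-1) * ((r1 - r0) * (r1 + r0)).
  transitivity (ro (2^-1) * (y + r1^+2) - ro (2^-1) * (y + r0^+2)); first by [].
  rewrite -mulrBr; congr (_ * _); clearbody r1 r0; ring.
set p1 := rh k.+1; set p0 := rh k.
have -> : rh k.+2 - p1 = 2^-1 * ((p1 - p0) * (p1 + p0)).
  transitivity (2^-1 * (1 + p1^+2) - 2^-1 * (1 + p0^+2)); first by [].
  clearbody p1 p0; ring.
rewrite nrm_roM ger0_norm ?half_ge0 // ler_pM2l ?half_gt0 //.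
apply: (le_trans (nrmM _ _)).
apply: ler_pM => //; try exact: nrm_ge0.
apply: (le_trans (nrmD _ _)); apply: lerD; exact: rs_nrm.
Qed.


Lemma rs_tele k l : (k <= l)%N -> nrm (rs y l - rs y k) <= rh l - rh k.
Proof.
elim: l => [|l IH].
  by rewrite leqn0 => /eqP ->; rewrite !subrr nrm0.
rewrite leq_eqVlt => /orP[/eqP <-|]; first by rewrite !subrr nrm0.
rewrite ltnS => /IH h.
have -> : rs y l.+1 - rs y k = (rs y l.+1 - rs y l) + (rs y l - rs y k).
  by rewrite addrA subrK.
apply: (le_trans (nrmD _ _)).
by have := lerD (rs_diff l) h; rewrite addrA subrK.
Qed.

Lemma rs_close k l : (k <= l)%N -> nrm (rs y l - rs y k) <= 1 - rh k.
Proof.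
move=> kl; apply: (le_trans (rs_tele kl)); rewrite lerD2r.
by have [/andP[]] := rh_bounds l.
Qed.

Lemma rh_small eps : 0 < eps -> exists N, forall k, (N <= k)%N -> 1 - rh k < eps.
Proof.
move=> e0; exists (Num.truncn (2 / eps)).+1 => k hk.
have h1 : 2 / eps < k%:R.
  apply: (lt_le_trans (truncnS_gt _)); by rewrite ler_nat.
set a := 2 / eps in h1.
have ha : a * eps = 2 by rewrite /a mulfVK // gt_eqF.
have [/andP[b0 b1] b2] := rh_bounds k.
have k0 : 0 <= (k%:R : R) by [].
nra.
Qed.

Lemma rs_cauchy : ncauchy nrm (rs y).
Proof.
move=> eps e0; have [N hN] := rh_small e0; exists N => k l hk hl.
have [kl|lk] := leqP k l.
  by rewrite nrm_sym; apply: (le_lt_trans (rs_close kl)); apply: hN.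
by apply: (le_lt_trans (rs_close (ltnW lk))); apply: hN.
Qed.

Lemma sqrt_ex : exists s, st s = s /\ 1 - y = s * s.
Proof.
have [r hr] := complete rs_cauchy.
have sr : st r = r.
  apply/eqP; rewrite -subr_eq0; apply/eqP; apply: (@zero_lem _ 2) => // eps e0.
  have [N hN] := hr eps e0; have h := hN N (leqnn N).
  have -> : st r - r = st (r - rs y N) + (rs y N - r) by rewrite stB rs_st addrA subrK.
  apply: (le_trans (nrmD _ _)); rewrite nrm_st nrm_sym.
  have := ltW h; lra.
have fp : r = ro (2^-1) * (y + r ^+ 2).
  apply/eqP; rewrite -subr_eq0; apply/eqP.
  have nr0 := nrm_ge0 r.
  apply: (@zero_lem _ (2 + nrm r)); first lra.
  move=> eps e0.
  have [N hN] := hr eps e0; have h := hN N (leqnn N); have h' := hN N.+1 (leqnSn N).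
  have -> : r - ro 2^-1 * (y + r ^+ 2) =
     (r - rs y N.+1) + ro (2^-1) * ((rs y N - r) * (rs y N + r)).
    rewrite rsS -addrA; congr (_ + _); ring.
  apply: (le_trans (nrmD _ _)); rewrite nrm_sym nrm_roM ger0_norm ?half_ge0 //.
  have h2 : nrm ((rs y N - r) * (rs y N + r)) <= eps * (1 + nrm r).
    apply: (le_trans (nrmM _ _)); apply: ler_pM; [exact: nrm_ge0|exact: nrm_ge0|exact: ltW h|].
    apply: (le_trans (nrmD _ _)); rewrite lerD2r.
    apply: (le_trans (rs_nrm N)); by have [/andP[]] := rh_bounds N.
  have hh := half_ge0; have hh1 : (2^-1 : R) <= 1 by rewrite invf_le1 ?ler1n.
  have h3 : 2^-1 * nrm ((rs y N - r) * (rs y N + r)) <= eps * (1 + nrm r).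
    apply: (le_trans _ h2); rewrite -[X in _ <= X]mul1r; apply: ler_wpM2r => //.
    exact: nrm_ge0.
  have := ltW h'; nra.
exists (1 - r); split; first by rewrite stB st1 sr.
have e0 : 2%:R * r = y + r ^+ 2.
  by rewrite {1}fp mulrA -ron -roM divff ?pnatr_eq0 // ro1 mul1r.
have e : y = 2%:R * r - r ^+ 2 by rewrite e0 addrK.
rewrite e; ring.
Qed.

End Sq.

Lemma sqrt_pos r : 0 <= r -> ro (Num.sqrt r) * ro (Num.sqrt r) = ro r.
Proof. by move=> r0; rewrite -roM -expr2 sqr_sqrtr. Qed.

Lemma posB h t : st h = h -> nrm h <= t -> positive st (ro t - h).
Proof.
move=> sh ht; have t0 : 0 <= t := le_trans (nrm_ge0 h) ht.
have [t00|tn0] := eqVneq t 0.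
  rewrite t00 in ht *.
  have h0 : h = 0 by apply: nrm_eq0; apply/eqP; rewrite eq_le ht nrm_ge0.
  by exists 0; rewrite h0 ro0 subr0 mulr0.
have tp : 0 < t by rewrite lt_def tn0 t0.
set y := ro t^-1 * h.
have sy : st y = y by rewrite /y st_roM sh.
have ny : nrm y <= 1.
  rewrite /y nrm_roM ger0_norm ?invr_ge0 // ler_pdivrMl // mulr1 //.
have [s [ss es]] := sqrt_ex sy ny.
exists (ro (Num.sqrt t) * s); rewrite st_roM ss.
have -> : ro t - h = ro t * (1 - y) by rewrite /y mulrBr mulr1 mulrA roV // mul1r.
rewrite es -(sqrt_pos t0); ring.
Qed.

Definition Qp (h : A) := st h = h /\ exists c, nrm h <= c /\ nrm (ro c - h) <= c.

Lemma Q_add a b : Qp a -> Qp b -> Qp (a + b).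
Proof.
move=> [sa [c1 [n1 m1]]] [sb [c2 [n2 m2]]]; split; first by rewrite stD sa sb.
exists (c1 + c2); split; first exact: (le_trans (nrmD _ _) (lerD n1 n2)).
have -> : ro (c1 + c2) - (a + b) = (ro c1 - a) + (ro c2 - b) by rewrite roD; ring.
exact: (le_trans (nrmD _ _) (lerD m1 m2)).
Qed.

Lemma Q_scale r h : 0 <= r -> Qp h -> Qp (ro r * h).
Proof.
move=> r0 [sh [c [n1 m1]]]; split; first by rewrite st_roM sh.
exists (r * c); rewrite nrm_roM ger0_norm //; split; first by rewrite ler_wpM2l.
have -> : ro (r * c) - ro r * h = ro r * (ro c - h) by rewrite roM mulrBr.
by rewrite nrm_roM ger0_norm // ler_wpM2l.
Qed.

Lemma Q_pos h : Qp h -> positive st h.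
Proof.
move=> [sh [c [n1 m1]]].
have e : ro c - (ro c - h) = h by ring.
have := @posB (ro c - h) c; rewrite e stB st_ro sh; apply => //.
Qed.

Definition Ii : A := ('i%C : R[i])%:A.
Lemma II : Ii * Ii = -1.
Proof. by rewrite /Ii mulr_algl scalerA -expr2 sqr_i scaleN1r. Qed.
Lemma st_alg k : st (k%:A : A) = (conjc k)%:A.
Proof. by rewrite /= stZ st1. Qed.
Lemma stI : st Ii = - Ii.
Proof.
rewrite /Ii st_alg -scaleNr; congr (_ *: _).
by apply/eqP; rewrite eq_complex /= oppr0 !eqxx.
Qed.
Lemma nrmI a : nrm (Ii * a) = nrm a.
Proof.
rewrite /Ii mulr_algl nrmZ.
have -> : cnorm ('i%C : R[i]) = 1 by rewrite /cnorm /= expr0n /= add0r expr1n sqrtr1.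
by rewrite mul1r.
Qed.

Lemma Q_sq x : st x = x -> Qp (x * x).
Proof.
move=> sx.
have [a0|an0] := eqVneq (nrm x) 0.
  rewrite (nrm_eq0 a0) mulr0; split; first exact: st0.
  by exists 0; rewrite nrm0 ro0 subr0 nrm0.
set a := nrm x in an0.
have ap : 0 < a by rewrite lt_def an0 nrm_ge0.
set x' := ro a^-1 * x.
have sx' : st x' = x' by rewrite /x' st_roM sx.
have nx' : nrm x' = 1 by rewrite /x' nrm_roM ger0_norm ?invr_ge0 ?ltW // mulVf.
set y := x' * x'.
have sy : st y = y by rewrite /y stC sx'.
have ny : nrm y <= 1.
  by apply: (le_trans (nrmM _ _)); rewrite nx' mulr1.
have [s [ss es]] := sqrt_ex sy ny.
set u := x' + Ii * s.
have su : st u = x' - Ii * s by rewrite /u stD stC stI ss sx'; ring.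
have uu : st u * u = 1.
  rewrite su /u.
  transitivity (x' * x' - (Ii * Ii) * (s * s)); first ring.
  by rewrite II -es /y; ring.
have nu : nrm u <= 1.
  have := nrm_cs u; rewrite uu nrm1 => h.
  have := nrm_ge0 u; nra.
have ns : nrm s <= 1.
  have e : u - st u = ro 2 * (Ii * s) by rewrite su /u ron; ring.
  have := nrmB u (st u); rewrite e nrm_roM nrmI nrm_st ger0_norm ?ler0n //.
  lra.
have Qy : Qp y.
  split => //; exists 1; split => //.
  rewrite ro1 es -{1}ss nrm_cs.
  have := nrm_ge0 s; nra.
have -> : x * x = ro (a ^+ 2) * y.
  rewrite /y /x' roX; transitivity ((ro a * ro a^-1) * x * ((ro a * ro a^-1) * x)).
    by rewrite roV ?mul1r.
  ring.
apply: Q_scale => //; exact: sqr_ge0.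
Qed.

Lemma pos_Q h : positive st h -> Qp h.
Proof.
move=> [b ->].
set H : A := ro (2^-1).
set x1 := H * (b + st b).
set x2 := Ii * H * (st b - b).
have sH : st H = H by rewrite /H st_ro.
have s1 : st x1 = x1 by rewrite /x1 stC sH stD stK addrC.
have s2 : st x2 = x2 by rewrite /x2 !stC stI sH stB stK; ring.
have H4 : H * H * 4%:R = 1.
  rewrite /H -ron -!roM.
  have -> : (2^-1 * 2^-1 * 4%:R : R) = 1 by field.
  exact: ro1.
have -> : st b * b = x1 * x1 + x2 * x2.
  transitivity (H * H * 4%:R * (st b * b)); first by rewrite H4 mul1r.
  rewrite /x1 /x2.
  transitivity (H * H * ((b + st b) * (b + st b)) + (Ii * Ii) * (H * H) * ((st b - b) * (st b - b))).
    by rewrite II; ring.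
  ring.
by apply: Q_add; apply: Q_sq.
Qed.

Lemma pos_add a b : positive st a -> positive st b -> positive st (a + b).
Proof. by move=> /pos_Q ha /pos_Q hb; apply: Q_pos; apply: Q_add. Qed.

Lemma pos0 : positive st 0.
Proof. by exists 0; rewrite mulr0. Qed.

Lemma pos_sum I (s : seq I) (P : pred I) (F : I -> A) :
  (forall i, P i -> positive st (F i)) -> positive st (\sum_(i <- s | P i) F i).
Proof.
move=> H; apply: (big_ind (positive st)) => //; [exact: pos0 | exact: pos_add].
Qed.

Lemma pos_ro r : positive st (ro r) -> 0 <= r.
Proof.
move=> /pos_Q [_ [c [n1 m1]]].
rewrite -roB nrm_ro in m1; rewrite nrm_ro in n1.
rewrite leNgt; apply/negP => rn.
rewrite ltr0_norm // in n1.
rewrite ger0_norm in m1; lra.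
Qed.

End CS.

Lemma card_sorted_gen (d m : nat) : (0 < d)%N ->
  #|[set t : m.-tuple 'I_d | sorted leq (map val t)]| = 'C(d + m - 1, m).
Proof.
case: d => // d _; rewrite card_sorted_tuples; congr binomial.
by rewrite addSn subn1 /= addnC.
Qed.

Section HM.
Variables (R : realType) (A : comAlgType R[i]) (nrm : A -> R) (st : A -> A).
Variable E : lmodType A.
Variable ip : E -> E -> A.
Hypothesis HC : is_Cstar_algebra nrm st.
Hypothesis HH : is_Hilbert_module nrm st ip.
Variables (d : nat) (w : 'I_d -> E).
Hypothesis hw1 : forall j k, ip (w j) (w k) = (j == k)%:R.
Hypothesis hw2 : forall x, x = \sum_(j < d) ip x (w j) *: w j.
Variables (n : nat) (tau : 'I_n -> E).
Hypothesis ht : forall j, ip (tau j) (tau j) = 1.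

Lemma ipD x y z : ip (x + y) z = ip x z + ip y z. Proof. by have [[h _] _ _ _ _] := HH. Qed.
Lemma ipZ a x y : ip (a *: x) y = a * ip x y. Proof. by have [[_ h] _ _ _ _] := HH. Qed.
Lemma ip_sym x y : st (ip x y) = ip y x. Proof. by have [_ h _ _ _] := HH. Qed.
Lemma ip0 z : ip 0 z = 0.
Proof. by rewrite -(scale0r 0) ipZ mul0r. Qed.
Lemma ip_sum I (r : seq I) (P : pred I) (F : I -> E) z :
  ip (\sum_(i <- r | P i) F i) z = \sum_(i <- r | P i) ip (F i) z.
Proof. exact: (big_morph (fun x => ip x z) (fun x y => ipD x y z) (ip0 z)). Qed.

Let stC := stC HC.
Let pos_sum := pos_sum HC.
Let pos_add := pos_add HC.
Let posB := posB HC.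
Let nrm_cs := nrm_cs HC.
Let st_ro := st_ro HC.
Let stB := stB HC.
Let nrm_ge0 := nrm_ge0 HC.
Let nrm1 := nrm1 HC.
Let nrmM := nrmM HC.
Let nrm_st := nrm_st HC.
Local Notation ro := (@ro _ A).
Local Notation roM := (@roM _ A).
Local Notation roB := (@roB _ A).
Local Notation roN := (@roN _ A).
Local Notation ron := (@ron _ A).
Local Notation ro0 := (@ro0 _ A).
Local Notation ro_sum := (@ro_sum _ A).
Let st1 := st1 HC.
Let stK := stK HC.
Lemma st_prod I (r : seq I) (P : pred I) (F : I -> A) :
  st (\prod_(i <- r | P i) F i) = \prod_(i <- r | P i) st (F i).
Proof. exact: (big_morph st stC st1). Qed.
Lemma st_sum I (r : seq I) (P : pred I) (F : I -> A) :
  st (\sum_(i <- r | P i) F i) = \sum_(i <- r | P i) st (F i).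
Proof. exact: (big_morph st (stD HC) (st0 HC)). Qed.
Lemma st_exp a k : st (a ^+ k) = st a ^+ k.
Proof. by elim: k => [|k IH]; rewrite ?expr0 ?st1 // !exprS stC IH. Qed.

Definition cc (j : 'I_n) (l : 'I_d) := ip (tau j) (w l).

Lemma G_exp j k : ip (tau j) (tau k) = \sum_(l < d) cc j l * st (cc k l).
Proof.
rewrite {1}(hw2 (tau j)) ip_sum; apply: eq_bigr => l _.
by rewrite ipZ ip_sym.
Qed.

Lemma cc_unit j : \sum_(l < d) st (cc j l) * cc j l = 1.
Proof. by rewrite -(ht j) G_exp; apply: eq_bigr => l _; rewrite mulrC. Qed.

Section M.
Variable m : nat.
Definition V (j : 'I_n) (f : {ffun 'I_m -> 'I_d}) := \prod_(i < m) cc j (f i).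

Lemma G_pow j k : ip (tau j) (tau k) ^+ m = \sum_f V j f * st (V k f).
Proof.
rewrite G_exp -[m in LHS]card_ord -prodr_const bigA_distr_bigA.
apply: eq_bigr => f _; rewrite /V st_prod -big_split /=.
by apply: eq_bigr.
Qed.

Definition Hm f g := \sum_k st (V k f) * V k g.

Lemma X_eq : \sum_(j < n) \sum_(k < n) ip (tau j) (tau k) ^+ m * ip (tau k) (tau j) ^+ m
  = \sum_f \sum_g st (Hm f g) * Hm f g.
Proof.
transitivity (\sum_j \sum_k \sum_f \sum_g
   (V j f * st (V j g)) * (st (V k f) * V k g)).
  apply: eq_bigr => j _; apply: eq_bigr => k _.
  rewrite !G_pow big_distrlr /=; apply: eq_bigr => f _; apply: eq_bigr => g _.
  ring.
transitivity (\sum_j \sum_f \sum_g \sum_k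
   (V j f * st (V j g)) * (st (V k f) * V k g)).
  apply: eq_bigr => j _; rewrite exchange_big; apply: eq_bigr => f _.
  by rewrite exchange_big.
rewrite exchange_big; apply: eq_bigr => f _; rewrite exchange_big.
apply: eq_bigr => g _.
rewrite /Hm st_sum big_distrlr /=; apply: eq_bigr => j _; apply: eq_bigr => k _.
rewrite stC stK; ring.
Qed.

Definition ordle : rel 'I_d := fun a b => (a <= b)%N.
Definition rep (f : {ffun 'I_m -> 'I_d}) : m.-tuple 'I_d := sort_tuple ordle (mktuple f).
Definition W j (t : m.-tuple 'I_d) := \prod_(x <- t) cc j x.
Definition Tset := [set t : m.-tuple 'I_d | sorted leq (map val t)].

Lemma V_rep j f : V j f = W j (rep f).
Proof.
rewrite /W /rep /= (perm_big (val (mktuple f))); last by rewrite perm_sort.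
by rewrite /mktuple /= big_map big_enum.
Qed.

Lemma rep_in f : rep f \in Tset.
Proof.
rewrite inE /rep /= sorted_map; apply: sort_sorted => a b; exact: leq_total.
Qed.

Definition xx t := \sum_k st (W k t) * W k t.
Definition zz t := \sum_(f | rep f == t) xx t.

Lemma st_xx t : st (xx t) = xx t.
Proof. by rewrite /xx st_sum; apply: eq_bigr => k _; rewrite stC stK mulrC. Qed.
Lemma st_zz t : st (zz t) = zz t.
Proof. by rewrite /zz st_sum; apply: eq_bigr => f _; rewrite st_xx. Qed.

Lemma H_rep f g : Hm f g = \sum_k st (W k (rep f)) * W k (rep g).
Proof. by apply: eq_bigr => k _; rewrite !V_rep. Qed.

Lemma sum_xx : \sum_f xx (rep f) = n%:R.
Proof.
transitivity (\sum_f Hm f f); first by apply: eq_bigr => f _; rewrite H_rep.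
rewrite /Hm exchange_big /=.
have -> : (n%:R : A) = \sum_(k < n) 1 by rewrite sumr_const card_ord.
apply: eq_bigr => k _.
transitivity (\prod_(i < m) \sum_(l < d) st (cc k l) * cc k l).
  rewrite bigA_distr_bigA; apply: eq_bigr => f _.
  by rewrite /V st_prod -big_split.
by rewrite big1 // => i _; rewrite cc_unit.
Qed.

Lemma sum_zz : \sum_(t in Tset) zz t = n%:R.
Proof.
rewrite -sum_xx (partition_big rep (mem Tset)) /=; last by move=> f _; exact: rep_in.
apply: eq_bigr => t _; apply: eq_bigr => f /eqP -> //.
Qed.

Lemma sum_diag :
  \sum_f \sum_(g | rep g == rep f) st (Hm f g) * Hm f g = \sum_(t in Tset) zz t * zz t.
Proof.
rewrite (partition_big rep (mem Tset)) /=; last by move=> f _; exact: rep_in.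
apply: eq_bigr => t _.
rewrite /zz big_distrlr /=; apply: eq_bigr => f /eqP ef.
rewrite ef; apply: eq_bigr => g /eqP eg.
by rewrite H_rep ef eg -/(xx t) st_xx.
Qed.

Definition Xs := \sum_(j < n) \sum_(k < n) ip (tau j) (tau k) ^+ m * ip (tau k) (tau j) ^+ m.

Lemma X_st : st Xs = Xs.
Proof.
rewrite /Xs X_eq st_sum; apply: eq_bigr => f _; rewrite st_sum; apply: eq_bigr => g _.
by rewrite stC stK mulrC.
Qed.

Lemma X_ge : (0 < m)%N -> positive st (Xs - ro ((n ^ 2)%:R / ('C(d + m - 1, m))%:R)).
Proof.
move=> m0; rewrite /Xs X_eq.
have [d0|dpos] := posnP d.
  have -> : 'C(d + m - 1, m) = 0%N by rewrite d0 add0n bin_small // ltn_subrL m0.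
  rewrite invr0 mulr0 ro0 subr0.
  apply: pos_sum => f _; apply: pos_sum => g _; by exists (Hm f g).
set C := 'C(d + m - 1, m).
have cT : #|Tset| = C by rewrite card_sorted_gen.
have C0 : (C%:R : R) != 0.
  by rewrite pnatr_eq0 -lt0n bin_gt0; move: dpos; clear; lia.
have -> : \sum_f \sum_g st (Hm f g) * Hm f g =
   \sum_f \sum_(g | rep g == rep f) st (Hm f g) * Hm f g +
   \sum_f \sum_(g | rep g != rep f) st (Hm f g) * Hm f g.
  by rewrite -big_split; apply: eq_bigr => f _; exact: bigID.
rewrite sum_diag.
set q := ro ((n%:R : R) / C%:R).
have key : \sum_(t in Tset) zz t * zz t - ro ((n ^ 2)%:R / C%:R) =
    \sum_(t in Tset) (zz t - q) * (zz t - q).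
  have e t : (zz t - q) * (zz t - q) = zz t * zz t - (2%:R * q) * zz t + q * q by ring.
  rewrite (eq_bigr _ (fun t _ => e t)) big_split sumrB /= -mulr_sumr sum_zz sumr_const cT.
  rewrite -addrA; congr (_ + _).
  rewrite /q -!ron -!roM -[X in _ + X]mulr_natr -ron -roM -!roN -roD; congr (ro _).
  by rewrite natrX; field.
rewrite addrAC key.
apply: pos_add.
  apply: pos_sum => t _; exists (zz t - q).
  by rewrite stB st_zz st_ro.
apply: pos_sum => f _; apply: pos_sum => g _; by exists (Hm f g).
Qed.

Lemma nrm_exp a k : nrm (a ^+ k) <= nrm a ^+ k.
Proof.
elim: k => [|k IH]; first by rewrite !expr0 nrm1.
rewrite !exprS; apply: (le_trans (nrmM _ _)); apply: ler_pM => //; exact: nrm_ge0.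
Qed.

Lemma X_le : positive st (ro (\sum_(j < n) \sum_(k < n) nrm (ip (tau j) (tau k)) ^+ (2 * m)) - Xs).
Proof.
rewrite /Xs ro_sum -sumrB; apply: pos_sum => j _.
rewrite ro_sum -sumrB; apply: pos_sum => k _.
set a := ip (tau j) (tau k).
have -> : ip (tau k) (tau j) = st a by rewrite ip_sym.
apply: posB => //.
  by rewrite stC !st_exp stK mulrC.
have -> : a ^+ m * st a ^+ m = st (st a ^+ m) * (st a ^+ m) by rewrite st_exp stK.
rewrite nrm_cs // mulnC exprM.
apply: lerXn2r; rewrite ?nnegrE ?nrm_ge0 ?exprn_ge0 ?nrm_ge0 //.
by apply: (le_trans (nrm_exp _ _)); rewrite nrm_st.
Qed.

End M.
End HM.

Lemma max_bound (R : realType) (n : nat) (a : 'I_n -> 'I_n -> R) (B : R) :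
  (2 <= n)%N -> (forall j k, 0 <= a j k) -> (forall j, a j j = 1) ->
  B <= \sum_(j < n) \sum_(k < n) a j k ->
  (n%:R - 1)^-1 * (B / n%:R - 1) <=
    \big[Num.max/0]_(j < n) \big[Num.max/0]_(k < n | j != k) a j k.
Proof.
move=> n2 a0 a1 hB.
set M := \big[Num.max/0]_(j < n) \big[Num.max/0]_(k < n | j != k) a j k.
have aM j k : j != k -> a j k <= M.
  move=> jk; apply: (@le_trans _ _ (\big[Num.max/0]_(k0 < n | j != k0) a j k0)).
    by apply: le_bigmax_cond.
  by rewrite /M; apply: (le_bigmax 0 (fun j => \big[Num.max/0]_(k0 < n | j != k0) a j k0)).
have M0 : 0 <= M by apply: bigmax_ge_id.
have hS : \sum_(j < n) \sum_(k < n) a j k <= n%:R * (1 + (n%:R - 1) * M).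
  have -> : n%:R * (1 + (n%:R - 1) * M) = \sum_(j < n) (1 + (n%:R - 1) * M).
    by rewrite sumr_const card_ord mulr_natl.
  apply: ler_sum => j _.
  rewrite (bigD1 j) //= a1 lerD2l.
  apply: (@le_trans _ _ (\sum_(k < n | k != j) M)).
    by apply: ler_sum => k kj; apply: aM; rewrite eq_sym.
  rewrite sumr_const.
  have -> : #|[pred k : 'I_n | k != j]| = n.-1.
    by transitivity #|predC1 j|; [apply: eq_card | rewrite cardC1 card_ord].
  rewrite -[M *+ _]mulr_natl -subn1 natrB; last by apply: leq_trans n2.
  by [].

have n0 : (0 : R) < n%:R by rewrite ltr0n; apply: leq_trans n2.
have n1 : (0 : R) < n%:R - 1.
  by rewrite subr_gt0 ltr1n.
rewrite mulrC ler_pdivrMr // lerBlDl.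
have : B <= n%:R * (1 + (n%:R - 1) * M) := le_trans hB hS.
rewrite -ler_pdivrMl // => h.
by rewrite mulrC; apply: (le_trans h); rewrite mulrC.
Qed.

Theorem theorem2p13 (R : realType) (A : comAlgType R[i]) (nrm : A -> R) (st : A -> A)
  (E : lmodType A) (ip : E -> E -> A) (d n : nat) (tau : 'I_n -> E) :
  is_AWstar_algebra nrm st ->
  is_Hilbert_module nrm st ip ->
  has_rank ip d ->
  (d <= n)%N ->
  (forall j, ip (tau j) (tau j) = 1) ->
  (forall m : nat, (0 < m)%N ->
     ge_sa st (rone (\sum_(j < n) \sum_(k < n) nrm (ip (tau j) (tau k)) ^+ (2 * m)))
              (\sum_(j < n) \sum_(k < n) ip (tau j) (tau k) ^+ m * ip (tau k) (tau j) ^+ m)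
     /\
     ge_sa st (\sum_(j < n) \sum_(k < n) ip (tau j) (tau k) ^+ m * ip (tau k) (tau j) ^+ m)
              (rone ((n ^ 2)%:R / ('C(d + m - 1, m))%:R : R)))
  /\
  (ge_sa st (rone (\sum_(j < n) \sum_(k < n) nrm (ip (tau j) (tau k)) ^+ 2))
            (\sum_(j < n) \sum_(k < n) ip (tau j) (tau k) * ip (tau k) (tau j))
   /\
   ge_sa st (\sum_(j < n) \sum_(k < n) ip (tau j) (tau k) * ip (tau k) (tau j))
            (rone ((n ^ 2)%:R / d%:R : R)))
  /\
  ((2 <= n)%N ->
     (forall m : nat, (0 < m)%N ->
        \big[Num.max/0]_(j < n) \big[Num.max/0]_(k < n | j != k)
            nrm (ip (tau j) (tau k)) ^+ (2 * m)
        >= (n%:R - 1)^-1 * (n%:R / ('C(d + m - 1, m))%:R - 1))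
     /\
     \big[Num.max/0]_(j < n) \big[Num.max/0]_(k < n | j != k)
         nrm (ip (tau j) (tau k)) ^+ 2
     >= (n%:R - d%:R) / (d%:R * (n%:R - 1))).
Proof.
move=> [HC _] HH [w [hw1 hw2]] dn ht.
have main m : (0 < m)%N ->
     ge_sa st (rone (\sum_(j < n) \sum_(k < n) nrm (ip (tau j) (tau k)) ^+ (2 * m)))
              (\sum_(j < n) \sum_(k < n) ip (tau j) (tau k) ^+ m * ip (tau k) (tau j) ^+ m)
     /\
     ge_sa st (\sum_(j < n) \sum_(k < n) ip (tau j) (tau k) ^+ m * ip (tau k) (tau j) ^+ m)
              (rone ((n ^ 2)%:R / ('C(d + m - 1, m))%:R : R)).
  move=> m0; have xs := X_st HC HH hw2 tau m.
  split; split; rewrite ?xs; try exact: (st_ro HC); split; rewrite ?xs ?(st_ro HC) //.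
    exact: (X_le HC HH tau m).
  exact: (X_ge HC HH hw2 ht m0).
have real_bound m : (0 < m)%N ->
   (n ^ 2)%:R / ('C(d + m - 1, m))%:R <=
   \sum_(j < n) \sum_(k < n) nrm (ip (tau j) (tau k)) ^+ (2 * m).
  move=> m0; have [[_ [_ p1]] [_ [_ p2]]] := main m m0.
  rewrite -subr_ge0; apply: (pos_ro HC).
  by rewrite (roB A) ; have := pos_add HC p1 p2; rewrite addrA subrK.
split; first exact: main.
split.
  have := main 1%N isT; rewrite addnK bin1; exact.
have mb m : (2 <= n)%N -> (0 < m)%N ->
   (n%:R - 1)^-1 * (n%:R / ('C(d + m - 1, m))%:R - 1) <=
   \big[Num.max/0]_(j < n) \big[Num.max/0]_(k < n | j != k)
            nrm (ip (tau j) (tau k)) ^+ (2 * m).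
  move=> n2 m0.
  have n0 : (n%:R : R) != 0 by rewrite pnatr_eq0 -lt0n; apply: leq_trans n2.
  have -> : (n%:R : R) / ('C(d + m - 1, m))%:R = (n ^ 2)%:R / ('C(d + m - 1, m))%:R / n%:R.
    by rewrite natrX mulrAC expr2 mulfK.
  apply: max_bound => //.
  - by move=> j k; apply: exprn_ge0; apply: (nrm_ge0 HC).
  - by move=> j; rewrite ht (nrm1 HC) expr1n.
  - exact: real_bound.
move=> n2; split; first by move=> m m0; apply: mb.
have := mb 1%N n2 isT; rewrite addnK bin1 => h.
have [d0|dpos] := posnP d.
  rewrite d0 mul0r invr0 mulr0; apply: bigmax_ge_id.
apply: le_trans h; rewrite le_eqVlt; apply/orP; left; apply/eqP.
have d0 : (d%:R : R) != 0 by rewrite pnatr_eq0 -lt0n.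
have n1 : (n%:R : R) - 1 != 0 by rewrite subr_eq0 pnatr_eq1; apply/eqP => e; rewrite e in n2.
by field; rewrite d0 n1.
Qed.
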